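(* Let $V=\bigoplus_{i=1}^m B_i$ be a near vector space over a commutative $F$ with finite block type (blocks $B_1,\dots,B_m$). Then every ultrapower $\prod V/\mathcal U$ of $V$ (as an $\mathcal L_{Fnvs}$-structure) is a near vector space over $F$.
   Context: An F-group is a pair $(V,F)$ where $(V,+)$ is a group and $F$ is a set of endomorphisms of $V$ such that: the maps $0,1,-1$ lie in $F$; $F\setminus\{0\}$ is a subgroup of $\mathrm{Aut}(V,+)$ under composition; and if $\alpha x=\beta x$ with $\alpha,\beta\in F$, $x\in V$ then $\alpha=\beta$ or $x=0$. The quasi-kernel $Q(V)$ is the set of $u\in V$ such that for all $\alpha,\beta\in F$ there is $\gamma\in F$ with $\alpha u+\beta u=\gamma u$. $(V,F)$ is a near vector space if $Q(V)$ generates $(V,+)$; commutative means $\alpha(\beta v)=\beta(\alpha v)$. The blocks of $V$ are the summands in André's decomposition of $V$ into maximal regular near vector subspaces (regular: any two nonzero quasi-kernel elements $u,v$ are compatible, i.e. $u+\lambda v\in Q(V)$ for some $\lambda\in F\setminus\{0\}$), each nonzero element of $Q(V)$ lying in exactly one block. Finite block type means finitely many blocks. The language $\mathcal L_{Fnvs}=\{+,0,(\lambda)_{\lambda\in F}\}$ has a unary function symbol for each $\lambda\in F$ interpreted as its action. *)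

(* Defs.v *)
From Stdlib Require Import List ClassicalEpsilon.
Set Implicit Arguments.

Section NVS.
Variables (T S : Type) (D : T -> Prop)
          (add : T -> T -> T) (zero : T) (act : S -> T -> T).

Definition eqD (f g : T -> T) : Prop := forall x, D x -> f x = g x.

Definition nz (s : S) : Prop := ~ eqD (act s) (fun _ => zero).

Definition is_group : Prop :=
  D zero /\
  (forall x y, D x -> D y -> D (add x y)) /\
  (forall x y z, D x -> D y -> D z -> add x (add y z) = add (add x y) z) /\
  (forall x, D x -> add zero x = x /\ add x zero = x) /\
  (forall x, D x -> exists y, D y /\ add x y = zero /\ add y x = zero).

Definition F_group : Prop :=
  is_group /\
  (forall s x, D x -> D (act s x)) /\
  (forall s x y, D x -> D y -> act s (add x y) = add (act s x) (act s y)) /\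
  (exists s0, eqD (act s0) (fun _ => zero)) /\
  (exists s1, eqD (act s1) (fun x => x)) /\
  (exists sm, forall x, D x -> add x (act sm x) = zero /\ add (act sm x) x = zero) /\
  (* F \ {0} is a subgroup of Aut(D,+) under composition *)
  (forall s, nz s ->
     (forall x y, D x -> D y -> act s x = act s y -> x = y) /\
     (forall y, D y -> exists x, D x /\ act s x = y)) /\
  (exists s1, nz s1 /\ eqD (act s1) (fun x => x)) /\
  (forall s t, nz s -> nz t ->
     exists u, nz u /\ eqD (act u) (fun x => act s (act t x))) /\
  (forall s, nz s -> exists u, nz u /\
     eqD (fun x => act u (act s x)) (fun x => x) /\
     eqD (fun x => act s (act u x)) (fun x => x)) /\
  (forall s t x, D x -> act s x = act t x -> eqD (act s) (act t) \/ x = zero).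

Definition quasi_kernel (u : T) : Prop :=
  D u /\ forall s t, exists g, add (act s u) (act t u) = act g u.

Inductive gen (P : T -> Prop) : T -> Prop :=
| gen_base x : P x -> gen P x
| gen_zero : gen P zero
| gen_add x y : gen P x -> gen P y -> gen P (add x y)
| gen_inv x y : gen P x -> D y -> add x y = zero -> gen P y.

Definition near_vector_space : Prop :=
  F_group /\ forall x, D x -> gen quasi_kernel x.

Definition regular : Prop :=
  forall u v, quasi_kernel u -> quasi_kernel v -> u <> zero -> v <> zero ->
    exists l, nz l /\ quasi_kernel (add u (act l v)).

Definition commutative_F : Prop :=
  forall s t x, D x -> act s (act t x) = act t (act s x).

End NVS.

Definition regular_subspace (V S : Type) (add : V -> V -> V) (zero : V)
  (act : S -> V -> V) (W : V -> Prop) : Prop :=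
  near_vector_space W add zero act /\ regular W add zero act.

Definition block (V S : Type) (add : V -> V -> V) (zero : V)
  (act : S -> V -> V) (W : V -> Prop) : Prop :=
  regular_subspace add zero act W /\
  forall W', regular_subspace add zero act W' ->
    (forall x, W x -> W' x) -> forall x, W' x -> W x.

Definition finite_block_type (V S : Type) (add : V -> V -> V) (zero : V)
  (act : S -> V -> V) : Prop :=
  exists l : list (V -> Prop),
    forall W, block add zero act W ->
      exists W', In W' l /\ forall x, W x <-> W' x.

Definition ultrafilter (I : Type) (U : (I -> Prop) -> Prop) : Prop :=
  U (fun _ => True) /\ ~ U (fun _ => False) /\
  (forall A B : I -> Prop, U A -> (forall i, A i -> B i) -> U B) /\
  (forall A B : I -> Prop, U A -> U B -> U (fun i => A i /\ B i)) /\
  (forall A : I -> Prop, U A \/ U (fun i => ~ A i)).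

(* ultrapower V^I / U as a genuine quotient type (set of equivalence classes) *)
Section Ultrapower.
Variables (I V S : Type) (U : (I -> Prop) -> Prop).

Definition ueq (f g : I -> V) : Prop := U (fun i => f i = g i).

Definition UP : Type := { P : (I -> V) -> Prop | exists f, P = ueq f }.

Definition UPclass (f : I -> V) : UP :=
  exist _ (ueq f) (ex_intro _ f eq_refl).

Definition UPrep (a : UP) : I -> V :=
  proj1_sig (constructive_indefinite_description _ (proj2_sig a)).

Definition UPadd (add : V -> V -> V) (a b : UP) : UP :=
  UPclass (fun i => add (UPrep a i) (UPrep b i)).

Definition UPzero (zero : V) : UP := UPclass (fun _ => zero).

Definition UPact (act : S -> V -> V) (s : S) (a : UP) : UP :=
  UPclass (fun i => act s (UPrep a i)).

End Ultrapower.

(* Main.v *)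
Require Import Defs.
From Stdlib Require Import List Classical ClassicalEpsilon FunctionalExtensionality PropExtensionality ProofIrrelevance.

Section VS.
Variables (V S : Type) (add : V -> V -> V) (zero : V) (act : S -> V -> V).
Hypothesis Hnvs : near_vector_space (fun _ : V => True) add zero act.
Hypothesis Hcomm : commutative_F (fun _ : V => True) act.

Let TT := fun _ : V => True.
Definition nzV s := nz TT zero act s.

Lemma assoc x y z : add x (add y z) = add (add x y) z.
Proof. destruct Hnvs as [[[_ [_ [H _]]] _] _]. apply H; exact I. Qed.
Lemma add0l x : add zero x = x.
Proof. destruct Hnvs as [[[_ [_ [_ [H _]]]] _] _]. apply H; exact I. Qed.
Lemma add0r x : add x zero = x.
Proof. destruct Hnvs as [[[_ [_ [_ [H _]]]] _] _]. apply H; exact I. Qed.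
Lemma act_add s x y : act s (add x y) = add (act s x) (act s y).
Proof. destruct Hnvs as [[_ [_ [H _]]] _]. apply H; exact I. Qed.
Lemma sm_ex : exists sm, forall x, add x (act sm x) = zero /\ add (act sm x) x = zero.
Proof. destruct Hnvs as [[_ [_ [_ [_ [_ [H _]]]]]] _].
  destruct H as [sm H]. exists sm. intro x. apply H; exact I. Qed.
Definition smv : S := proj1_sig (constructive_indefinite_description _ sm_ex).
Definition neg x := act smv x.
Lemma neg_r x : add x (neg x) = zero.
Proof. unfold neg, smv. destruct (constructive_indefinite_description _ sm_ex) as [s H]; simpl. apply H. Qed.
Lemma neg_l x : add (neg x) x = zero.
Proof. unfold neg, smv. destruct (constructive_indefinite_description _ sm_ex) as [s H]; simpl. apply H. Qed.
Lemma inv_uniq x y : add x y = zero -> y = neg x.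
Proof. intro H. rewrite <- (add0l y), <- (neg_l x), <- assoc, H, add0r. reflexivity. Qed.
Lemma cancel x y z : add x y = add x z -> y = z.
Proof. intro H. rewrite <- (add0l y), <- (add0l z), <- (neg_l x), <- !assoc, H. reflexivity. Qed.
Lemma act_zero s : act s zero = zero.
Proof. apply (cancel (act s zero)). rewrite <- act_add, !add0r. reflexivity. Qed.
Lemma neg_add x y : neg (add x y) = add (neg x) (neg y).
Proof. apply act_add. Qed.
Lemma neg_neg x : neg (neg x) = x.
Proof. symmetry. apply inv_uniq. apply neg_l. Qed.
Lemma addC x y : add x y = add y x.
Proof.
  assert (E: forall a b, add (neg a) (neg b) = add (neg b) (neg a)).
  { intros a b. rewrite <- neg_add. symmetry. apply inv_uniq.
    rewrite <- assoc, (assoc b), neg_r, add0l, neg_r. reflexivity. }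
  rewrite <- (neg_neg x), <- (neg_neg y). apply E. Qed.
Lemma rearr p q r s : add (add p q) (add r s) = add (add p r) (add q s).
Proof. rewrite <- !assoc. f_equal. rewrite !assoc. f_equal. apply addC. Qed.
Lemma act_neg s x : act s (neg x) = neg (act s x).
Proof. apply inv_uniq. rewrite <- act_add, neg_r. apply act_zero. Qed.
Lemma comm s t x : act s (act t x) = act t (act s x).
Proof. apply Hcomm. exact I. Qed.

Lemma nz_inj s x y : nzV s -> act s x = act s y -> x = y.
Proof. intros Hs E. destruct Hnvs as [[_ [_ [_ [_ [_ [_ [H _]]]]]]] _].
  destruct (H s Hs) as [Hi _]. apply Hi; auto. Qed.
Lemma nz_ne s x : nzV s -> x <> zero -> act s x <> zero.
Proof. intros Hs Hx E. apply Hx. apply (nz_inj s x zero Hs). rewrite act_zero. exact E. Qed.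
Lemma not_nz s x : ~ nzV s -> act s x = zero.
Proof. intro H. unfold nzV, nz in H. apply NNPP in H. apply H. exact I. Qed.
Lemma fpf s t x : act s x = act t x -> x = zero \/ forall y, act s y = act t y.
Proof. intro E. destruct Hnvs as [[_ [_ [_ [_ [_ [_ [_ [_ [_ [_ H]]]]]]]]]] _].
  destruct (H s t x I E) as [H1|H1]; [right|left; exact H1]. intro y. apply H1. exact I. Qed.
Lemma fpf' s t x : act s x = act t x -> x <> zero -> forall y, act s y = act t y.
Proof. intros E Hx. destruct (fpf s t x E); [contradiction|assumption]. Qed.
Lemma comp_closed s t : exists r, forall x, act r x = act s (act t x).
Proof.
  destruct (classic (nzV s)) as [Hs|Hs]; [destruct (classic (nzV t)) as [Ht|Ht]|].
  - destruct Hnvs as [[_ [_ [_ [_ [_ [_ [_ [_ [H _]]]]]]]]] _].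
    destruct (H s t Hs Ht) as [u [_ Hu]]. exists u. intro x. apply Hu. exact I.
  - exists t. intro x. rewrite (not_nz t _ Ht), act_zero. reflexivity.
  - exists s. intro x. rewrite !(not_nz s _ Hs). reflexivity.
Qed.
Lemma inv_ex s : nzV s -> exists u, nzV u /\ forall x, act u (act s x) = x /\ act s (act u x) = x.
Proof. intro Hs. destruct Hnvs as [[_ [_ [_ [_ [_ [_ [_ [_ [_ [H _]]]]]]]]]] _].
  destruct (H s Hs) as [u [Hu [H1 H2]]]. exists u. split; [exact Hu|]. intro x.
  split; [apply H1|apply H2]; exact I. Qed.
Lemma one_ex : exists s1, nzV s1 /\ forall x, act s1 x = x.
Proof. destruct Hnvs as [[_ [_ [_ [_ [_ [_ [_ [H _]]]]]]]] _].
  destruct H as [s [Hs H]]. exists s. split; [exact Hs|]. intro x. apply H. exact I. Qed.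
Lemma zero_ex : exists s0, forall x, act s0 x = zero.
Proof. destruct Hnvs as [[_ [_ [_ [H _]]]] _].
  destruct H as [s H]. exists s. intro x. apply H. exact I. Qed.

Definition PT (tau : S -> S -> S) x := forall a b, add (act a x) (act b x) = act (tau a b) x.

Lemma PT_zero tau : PT tau zero.
Proof. intros a b. rewrite !act_zero, add0l. reflexivity. Qed.
Lemma PT_add tau x y : PT tau x -> PT tau y -> PT tau (add x y).
Proof. intros Hx Hy a b. rewrite !act_add, rearr, Hx, Hy. reflexivity. Qed.
Lemma PT_act tau c x : PT tau x -> PT tau (act c x).
Proof. intros Hx a b. rewrite !(comm a c), !(comm b c), <- act_add, Hx, comm. reflexivity. Qed.
Lemma PT_neg tau x : PT tau x -> PT tau (neg x).
Proof. apply PT_act. Qed.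

Lemma qk_PT u : quasi_kernel TT add act u -> exists tau, PT tau u.
Proof.
  intros [_ H].
  exists (fun a b => proj1_sig (constructive_indefinite_description _ (H a b))).
  intros a b. destruct (constructive_indefinite_description _ (H a b)). simpl. exact e.
Qed.

Lemma sub_eq A B C D : add A B = add C D -> add A (neg C) = add D (neg B).
Proof.
  intro E. rewrite <- (add0r (add A (neg C))), <- (neg_r B).
  rewrite rearr, E, rearr, neg_r, add0l. reflexivity.
Qed.

Lemma keyB tau sig u v l : u <> zero -> v <> zero -> PT tau u -> PT sig v -> nzV l ->
  quasi_kernel TT add act (add u (act l v)) ->
  forall a b x, act (tau a b) x = act (sig a b) x.
Proof.
  intros Hu Hv Pu Pv Hl [_ Hw] a b.
  set (v' := act l v).
  assert (Hv' : v' <> zero) by (apply nz_ne; assumption).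
  assert (Pv' : PT sig v') by (apply PT_act; exact Pv).
  destruct (Hw a b) as [g Eg].
  rewrite !act_add in Eg. fold v' in Eg. rewrite rearr, Pu, Pv' in Eg.
  apply sub_eq in Eg.
  destruct (comp_closed smv g) as [r1 Hr1].
  destruct (comp_closed smv (sig a b)) as [r2 Hr2].
  assert (E1 : add (act (tau a b) u) (neg (act g u)) = act (tau (tau a b) r1) u).
  { unfold neg. rewrite <- Hr1. apply Pu. }
  assert (E2 : add (act g v') (neg (act (sig a b) v')) = act (sig g r2) v').
  { unfold neg. rewrite <- Hr2. apply Pv'. }
  rewrite E1, E2 in Eg.
  destruct (classic (act (tau (tau a b) r1) u = zero)) as [Z|Z].
  - rewrite Z in E1. rewrite <- Eg, Z in E2.
    apply inv_uniq in E1. apply inv_uniq in E2.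
    apply (f_equal neg) in E1. apply (f_equal neg) in E2. rewrite !neg_neg in E1, E2.
    intro x. rewrite <- (fpf' _ _ _ E1 Hu x). symmetry. exact (fpf' _ _ _ E2 Hv' x).
  - assert (Hn : nzV (tau (tau a b) r1)).
    { intro H. apply Z. apply H. exact I. }
    destruct (inv_ex _ Hn) as [k [_ Hk]].
    destruct (comp_closed k (sig g r2)) as [c Hc].
    assert (Euc : u = act c v').
    { rewrite Hc, <- Eg. symmetry. apply Hk. }
    assert (E3 : act (tau a b) u = act (sig a b) u).
    { rewrite <- (Pu a b). rewrite Euc, !(comm _ c), <- act_add, (Pv' a b). reflexivity. }
    apply (fpf' _ _ _ E3 Hu).
Qed.

Lemma nzW_V (W : V -> Prop) s : nz W zero act s -> nzV s.
Proof. intros H1 H2. apply H1. intros x _. apply H2. exact I. Qed.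
Lemma nzV_W (W : V -> Prop) s u0 : W u0 -> u0 <> zero -> nzV s -> nz W zero act s.
Proof. intros Hw Hu Hs H. apply (nz_ne s u0 Hs Hu). apply H. exact Hw. Qed.

Lemma PT_block tau u0 : u0 <> zero -> PT tau u0 -> block add zero act (PT tau).
Proof.
  intros Hu0 Pu0.
  assert (Hqk : forall x, PT tau x -> quasi_kernel (PT tau) add act x).
  { intros x Hx. split; [exact Hx|]. intros s t. exists (tau s t). apply Hx. }
  assert (HN : forall s, nz (PT tau) zero act s <-> nzV s).
  { intro s; split; [apply nzW_V|]. apply (nzV_W _ _ _ Pu0 Hu0). }
  split; [split; [split|]|].
  -
    split; [|split; [|split; [|split; [|split; [|split; [|split; [|split; [|split; [|split]]]]]]]]].
    + split; [apply PT_zero|]. split; [intros; apply PT_add; assumption|].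
      split; [intros; apply assoc|]. split; [intros; split; [apply add0l|apply add0r]|].
      intros x Hx. exists (neg x). split; [apply PT_neg; exact Hx|].
      split; [apply neg_r|apply neg_l].
    + intros s x Hx. apply PT_act. exact Hx.
    + intros; apply act_add.
    + destruct zero_ex as [s0 H]. exists s0. intros x _. apply H.
    + destruct one_ex as [s1 [_ H]]. exists s1. intros x _. apply H.
    + exists smv. intros x _. split; [apply neg_r|apply neg_l].
    + intros s Hs. apply HN in Hs. split.
      * intros x y _ _. apply nz_inj. exact Hs.
      * intros y Hy. destruct (inv_ex _ Hs) as [u [_ Hu]].
        exists (act u y). split; [apply PT_act; exact Hy|]. apply Hu.
    + destruct one_ex as [s1 [H1 H]]. exists s1. split; [apply HN; exact H1|].
      intros x _. apply H.
    + intros s t Hs Ht. apply HN in Hs. apply HN in Ht.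
      destruct Hnvs as [[_ [_ [_ [_ [_ [_ [_ [_ [H _]]]]]]]]] _].
      destruct (H s t Hs Ht) as [u [Hu E]]. exists u. split; [apply HN; exact Hu|].
      intros x _. apply E. exact I.
    + intros s Hs. apply HN in Hs.
      destruct Hnvs as [[_ [_ [_ [_ [_ [_ [_ [_ [_ [H _]]]]]]]]]] _].
      destruct (H s Hs) as [u [Hu [E1 E2]]]. exists u. split; [apply HN; exact Hu|].
      split; intros x _; [apply E1|apply E2]; exact I.
    + intros s t x _ E. destruct (fpf s t x E) as [H|H]; [right; exact H|left].
      intros y _. apply H.
  - intros x Hx. apply gen_base. apply Hqk. exact Hx.
  -
    intros u v [Hu _] [Hv _] _ _. destruct one_ex as [s1 [H1 H]].
    exists s1. split; [apply HN; exact H1|]. apply Hqk. rewrite H. apply PT_add; assumption.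
  -
    intros W' [[_ Hgen] Hreg] Hsub x Hx.
    specialize (Hgen x Hx). clear Hx. induction Hgen as [y Hy| |y z _ IH1 _ IH2|y z _ IH _ E].
    + destruct (classic (y = zero)) as [Z|Z]; [rewrite Z; apply PT_zero|].
      assert (Q0 : quasi_kernel W' add act u0).
      { split; [apply Hsub; exact Pu0|]. intros s t. exists (tau s t). apply Pu0. }
      destruct (Hreg u0 y Q0 Hy Hu0 Z) as [l [Hl [_ Hw]]].
      destruct (qk_PT y) as [sig Hsig]; [split; [exact I|apply Hy]|].
      assert (K := keyB tau sig u0 y l Hu0 Z Pu0 Hsig (nzW_V _ _ Hl) (conj I Hw)).
      intros a b. rewrite K. apply Hsig.
    + apply PT_zero.
    + apply PT_add; assumption.
    + apply inv_uniq in E. rewrite E. apply PT_neg. exact IH.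
Qed.
Definition Blocky (W : V -> Prop) := exists tau, forall x, W x <-> PT tau x.
Definition G (W : V -> Prop) y := y = zero \/ (Blocky W /\ W y).
Fixpoint Dec (l : list (V -> Prop)) x : Prop :=
  match l with
  | nil => x = zero
  | W :: l' => exists y z, G W y /\ Dec l' z /\ x = add y z
  end.

Lemma G_zero W : G W zero.
Proof. left; reflexivity. Qed.
Lemma G_add W y1 y2 : G W y1 -> G W y2 -> G W (add y1 y2).
Proof.
  intros [E1|[B1 H1]] [E2|[B2 H2]].
  - left. rewrite E1, E2, add0l. reflexivity.
  - right. rewrite E1, add0l. split; assumption.
  - right. rewrite E2, add0r. split; assumption.
  - right. split; [exact B1|]. destruct B1 as [tau Ht].
    apply Ht. apply PT_add; apply Ht; assumption.
Qed.
Lemma G_neg W y : G W y -> G W (neg y).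
Proof.
  intros [E|[B H]].
  - left. rewrite E. unfold neg. apply act_zero.
  - right. split; [exact B|]. destruct B as [tau Ht]. apply Ht. apply PT_neg. apply Ht; assumption.
Qed.
Lemma Dec_zero l : Dec l zero.
Proof. induction l as [|W l IH]; simpl; [reflexivity|].
  exists zero, zero. split; [apply G_zero|]. split; [exact IH|]. rewrite add0l; reflexivity. Qed.
Lemma Dec_add l x1 x2 : Dec l x1 -> Dec l x2 -> Dec l (add x1 x2).
Proof.
  revert x1 x2. induction l as [|W l IH]; simpl; intros x1 x2.
  - intros -> ->. apply add0l.
  - intros [y1 [z1 [G1 [D1 E1]]]] [y2 [z2 [G2 [D2 E2]]]].
    exists (add y1 y2), (add z1 z2). split; [apply G_add; assumption|].
    split; [apply IH; assumption|]. rewrite E1, E2. apply rearr.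
Qed.
Lemma Dec_neg l x : Dec l x -> Dec l (neg x).
Proof.
  revert x. induction l as [|W l IH]; simpl; intros x.
  - intros ->. unfold neg. apply act_zero.
  - intros [y [z [G1 [D1 E1]]]]. exists (neg y), (neg z).
    split; [apply G_neg; assumption|]. split; [apply IH; assumption|].
    rewrite E1. apply neg_add.
Qed.
Lemma Dec_in l W y : In W l -> Blocky W -> W y -> Dec l y.
Proof.
  induction l as [|W' l IH]; simpl; [intros []|].
  intros [E|Hin] HB Hy.
  - subst W'. exists y, zero. split; [right; split; assumption|].
    split; [apply Dec_zero|]. rewrite add0r; reflexivity.
  - exists zero, y. split; [apply G_zero|]. split; [apply IH; assumption|].
    rewrite add0l; reflexivity.
Qed.

Lemma Dec_all : finite_block_type add zero act -> exists l, forall x, Dec l x.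
Proof.
  intros [l Hl]. exists l. intro x.
  destruct Hnvs as [_ Hgen]. specialize (Hgen x I).
  induction Hgen as [y Hy| |y z _ IH1 _ IH2|y z _ IH _ E].
  - destruct (classic (y = zero)) as [Z|Z]; [rewrite Z; apply Dec_zero|].
    destruct (qk_PT y Hy) as [tau Ht].
    destruct (Hl _ (PT_block tau y Z Ht)) as [W [Hin HW]].
    apply (Dec_in l W y Hin).
    + exists tau. intro z. split; intro H; apply HW; exact H.
    + apply HW. exact Ht.
  - apply Dec_zero.
  - apply Dec_add; assumption.
  - apply inv_uniq in E. rewrite E. apply Dec_neg. exact IH.
Qed.
Variables (Ix : Type) (U : (Ix -> Prop) -> Prop).
Hypothesis HU : ultrafilter U.
Implicit Types f g h : Ix -> V.

Lemma U_sup (A B : Ix -> Prop) : U A -> (forall i, A i -> B i) -> U B.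
Proof. destruct HU as [_ [_ [H _]]]. apply H. Qed.
Lemma U_and (A B : Ix -> Prop) : U A -> U B -> U (fun i => A i /\ B i).
Proof. destruct HU as [_ [_ [_ [H _]]]]. apply H. Qed.
Lemma U_all (A : Ix -> Prop) : (forall i, A i) -> U A.
Proof. intro H. destruct HU as [HT _]. apply (U_sup _ _ HT). intros i _; apply H. Qed.
Lemma U_ne (A : Ix -> Prop) : U A -> exists i, A i.
Proof. intro H. apply NNPP. intro N. destruct HU as [_ [HF _]]. apply HF.
  apply (U_sup _ _ H). intros i Hi. apply N. exists i; exact Hi. Qed.
Lemma U_em (A : Ix -> Prop) : U A \/ U (fun i => ~ A i).
Proof. destruct HU as [_ [_ [_ [_ H]]]]. apply H. Qed.

Lemma ueq_refl f : ueq U f f.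
Proof. apply U_all. reflexivity. Qed.
Lemma ueq_sym f g : ueq U f g -> ueq U g f.
Proof. intro H. apply (U_sup _ _ H). intros; symmetry; assumption. Qed.
Lemma ueq_trans f g h : ueq U f g -> ueq U g h -> ueq U f h.
Proof. intros H1 H2. apply (U_sup _ _ (U_and _ _ H1 H2)). intros i [E1 E2]. congruence. Qed.

Notation cls := (UPclass U).

Lemma exist_eq (P Q : (Ix -> V) -> Prop) (p : exists f, P = ueq U f) (q : exists f, Q = ueq U f) :
  P = Q -> (exist _ P p : UP V U) = exist _ Q q.
Proof. intro E. subst Q. f_equal. apply proof_irrelevance. Qed.

Lemma cls_eq f g : ueq U f g -> cls f = cls g.
Proof.
  intro H. unfold UPclass. apply exist_eq. apply functional_extensionality. intro h.
  apply propositional_extensionality. split; intro H'.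
  - apply (ueq_trans g f h); [apply ueq_sym; exact H|exact H'].
  - apply (ueq_trans f g h); assumption.
Qed.
Lemma cls_inj f g : cls f = cls g -> ueq U f g.
Proof.
  intro E. apply (f_equal (@proj1_sig _ _)) in E. simpl in E.
  apply (f_equal (fun P => P g)) in E. rewrite E. apply ueq_refl.
Qed.
Lemma rep_cls (a : UP V U) : cls (UPrep a) = a.
Proof.
  destruct a as [P Pp]. unfold UPrep, UPclass. simpl.
  destruct (constructive_indefinite_description _ Pp) as [g Hg]. simpl.
  apply exist_eq. symmetry. exact Hg.
Qed.
Lemma rep_ueq f : ueq U (UPrep (cls f)) f.
Proof. apply cls_inj. apply rep_cls. Qed.
Lemma cls_all f g : (forall i, f i = g i) -> cls f = cls g.
Proof. intro H. apply cls_eq. apply U_all. exact H. Qed.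
Lemma add_cls f g : UPadd add (cls f) (cls g) = cls (fun i => add (f i) (g i)).
Proof.
  unfold UPadd. apply cls_eq. apply (U_sup _ _ (U_and _ _ (rep_ueq f) (rep_ueq g))).
  intros i [E1 E2]. simpl. rewrite E1, E2. reflexivity.
Qed.
Lemma act_cls s f : UPact act s (cls f) = cls (fun i => act s (f i)).
Proof.
  unfold UPact. apply cls_eq. apply (U_sup _ _ (rep_ueq f)).
  intros i E1. rewrite E1. reflexivity.
Qed.
Lemma cls_surj (a : UP V U) : exists f, a = cls f.
Proof. exists (UPrep a). symmetry. apply rep_cls. Qed.
Lemma zero_cls : UPzero U zero = cls (fun _ => zero).
Proof. reflexivity. Qed.

Definition nzU s := nz (fun _ : UP V U => True) (UPzero U zero) (UPact act) s.

Lemma nzU_V s : nzU s -> nzV s.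
Proof.
  intros H1 H2. apply H1. intros a _. destruct (cls_surj a) as [f ->].
  rewrite act_cls, zero_cls. apply cls_all. intro i. apply H2. exact I.
Qed.
Lemma nzV_U s : nzV s -> nzU s.
Proof.
  intros H1 H2. apply H1. intros x _. apply NNPP. intro Nx.
  specialize (H2 (cls (fun _ => x)) I). rewrite act_cls, zero_cls in H2.
  apply cls_inj in H2. destruct (U_ne _ H2) as [i Hi]. exact (Nx Hi).
Qed.

Lemma UP_Fgroup : F_group (fun _ : UP V U => True) (UPadd add) (UPzero U zero) (UPact act).
Proof.
  split; [|split; [|split; [|split; [|split; [|split; [|split; [|split; [|split; [|split]]]]]]]]].
  - split; [exact I|]. split; [intros; exact I|].
    split; [|split].
    + intros a b c _ _ _. destruct (cls_surj a) as [f ->]. destruct (cls_surj b) as [g ->].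
      destruct (cls_surj c) as [h ->]. rewrite !add_cls. apply cls_all. intro i. apply assoc.
    + intros a _. destruct (cls_surj a) as [f ->]. rewrite zero_cls, !add_cls.
      split; apply cls_all; intro i; [apply add0l|apply add0r].
    + intros a _. destruct (cls_surj a) as [f ->]. exists (cls (fun i => neg (f i))).
      split; [exact I|]. rewrite zero_cls, !add_cls.
      split; apply cls_all; intro i; [apply neg_r|apply neg_l].
  - intros; exact I.
  - intros s a b _ _. destruct (cls_surj a) as [f ->]. destruct (cls_surj b) as [g ->].
    rewrite !add_cls, !act_cls, add_cls. apply cls_all. intro i. apply act_add.
  - destruct zero_ex as [s0 H]. exists s0. intros a _. destruct (cls_surj a) as [f ->].
    rewrite act_cls, zero_cls. apply cls_all. intro i. apply H.
  - destruct one_ex as [s1 [_ H]]. exists s1. intros a _. destruct (cls_surj a) as [f ->].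
    rewrite act_cls. apply cls_all. intro i. apply H.
  - exists smv. intros a _. destruct (cls_surj a) as [f ->].
    rewrite act_cls, zero_cls, !add_cls.
    split; apply cls_all; intro i; [apply neg_r|apply neg_l].
  - intros s Hs. apply nzU_V in Hs. split.
    + intros a b _ _. destruct (cls_surj a) as [f ->]. destruct (cls_surj b) as [g ->].
      rewrite !act_cls. intro E. apply cls_inj in E. apply cls_eq.
      apply (U_sup _ _ E). intros i Ei. apply (nz_inj s _ _ Hs Ei).
    + intros b _. destruct (cls_surj b) as [g ->]. destruct (inv_ex _ Hs) as [u [_ Hu]].
      exists (cls (fun i => act u (g i))). split; [exact I|]. rewrite act_cls.
      apply cls_all. intro i. apply Hu.
  - destruct one_ex as [s1 [H1 H]]. exists s1. split; [apply nzV_U; exact H1|].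
    intros a _. destruct (cls_surj a) as [f ->].
    rewrite act_cls. apply cls_all. intro i. apply H.
  - intros s t Hs Ht. apply nzU_V in Hs. apply nzU_V in Ht.
    destruct Hnvs as [[_ [_ [_ [_ [_ [_ [_ [_ [H _]]]]]]]]] _].
    destruct (H s t Hs Ht) as [u [Hu E]]. exists u. split; [apply nzV_U; exact Hu|].
    intros a _. destruct (cls_surj a) as [f ->]. rewrite !act_cls.
    apply cls_all. intro i. apply E. exact I.
  - intros s Hs. apply nzU_V in Hs.
    destruct (inv_ex _ Hs) as [u [Hu E]]. exists u. split; [apply nzV_U; exact Hu|].
    split; intros a _; destruct (cls_surj a) as [f ->]; rewrite !act_cls;
      apply cls_all; intro i; apply E.
  - intros s t a _ E. destruct (cls_surj a) as [f ->]. rewrite !act_cls in E.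
    apply cls_inj in E.
    destruct (U_em (fun i => f i = zero)) as [Z|NZ].
    + right. rewrite zero_cls. apply cls_eq. exact Z.
    + left. destruct (U_ne _ (U_and _ _ E NZ)) as [i [Ei Ni]].
      destruct (fpf s t (f i) Ei) as [Z|H]; [contradiction|].
      intros b _. destruct (cls_surj b) as [g ->]. rewrite !act_cls.
      apply cls_all. intro j. apply H.
Qed.

Lemma gen_Dec l : forall f, (forall i, Dec l (f i)) ->
  gen (fun _ : UP V U => True) (UPadd add) (UPzero U zero)
      (quasi_kernel (fun _ : UP V U => True) (UPadd add) (UPact act)) (cls f).
Proof.
  induction l as [|W l IH]; simpl; intros f Hf.
  - replace (cls f) with (UPzero U zero); [apply gen_zero|].
    rewrite zero_cls. apply cls_all. intro i. symmetry. apply Hf.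
  - pose (y := fun i => proj1_sig (constructive_indefinite_description _ (Hf i))).
    pose (z := fun i => proj1_sig (constructive_indefinite_description _
                 (proj2_sig (constructive_indefinite_description _ (Hf i))))).
    assert (Hyz : forall i, G W (y i) /\ Dec l (z i) /\ f i = add (y i) (z i)).
    { intro i. unfold y, z.
      destruct (constructive_indefinite_description _ (Hf i)) as [yi Hyi]. simpl.
      destruct (constructive_indefinite_description _ Hyi) as [zi Hzi]. simpl. exact Hzi. }
    replace (cls f) with (UPadd add (cls y) (cls z)).
    2:{ rewrite add_cls. apply cls_all. intro i. symmetry. apply Hyz. }
    apply gen_add; [|apply IH; intro i; apply Hyz].
    apply gen_base. split; [exact I|]. intros s t.
    destruct (classic (Blocky W)) as [[tau Ht]|NB].
    + exists (tau s t). rewrite !act_cls, add_cls. apply cls_all. intro i.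
      destruct (proj1 (Hyz i)) as [E|[_ Hw]].
      * rewrite E. apply PT_zero.
      * apply Ht. exact Hw.
    + exists s. rewrite !act_cls, add_cls. apply cls_all. intro i.
      destruct (proj1 (Hyz i)) as [E|[B _]]; [|contradiction].
      rewrite E, !act_zero, add0l. reflexivity.
Qed.

Lemma UP_nvs : finite_block_type add zero act ->
  near_vector_space (fun _ : UP V U => True) (UPadd add) (UPzero U zero) (UPact act).
Proof.
  intro Hfb. split; [apply UP_Fgroup|]. intros a _.
  destruct (Dec_all Hfb) as [l Hl]. destruct (cls_surj a) as [f ->].
  apply gen_Dec with l. intro i. apply Hl.
Qed.
End VS.

Theorem mainTheorem13 (V S : Type) (add : V -> V -> V) (zero : V)
  (act : S -> V -> V) :
  near_vector_space (fun _ : V => True) add zero act ->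
  commutative_F (fun _ : V => True) act ->
  finite_block_type add zero act ->
  forall (I : Type) (U : (I -> Prop) -> Prop),
    ultrafilter U ->
    near_vector_space (fun _ : @UP I V U => True)
      (@UPadd I V U add) (@UPzero I V U zero) (@UPact I V S U act).
Proof.
  intros Hnvs Hcomm Hfb I U HU.
  exact (UP_nvs V S add zero act Hnvs Hcomm I U HU Hfb).
Qed.
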